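(* Let $S$ be a numerical semigroup with minimal generators $a_1<a_2<\cdots<a_\nu$ ($\nu\ge2$), multiplicity $\mu=a_1$ and conductor $c$, and suppose $a_2>\frac{c+\mu}{3}$. Let $P=\{a_1,\dots,a_\nu\}$, $q_1=|\{a\in P\setminus\{\mu\}: \tfrac13(c+\mu)<a<\tfrac12(c+\mu)\}|$, $q_2=|\{a\in P\setminus\{\mu\}: \tfrac12(c+\mu)\le a<\tfrac23(c+\mu)\}|$, and $L(S)=\{x\in S: 0\le x<c\}$. Then $$|L(S)|\ge\left\lfloor\frac{c}{\mu}\right\rfloor+\left(\left\lfloor\frac12\frac{c}{\mu}-\frac12\right\rfloor+1\right)q_1+\left(\left\lfloor\frac13\frac{c}{\mu}-\frac23\right\rfloor+1\right)q_2.$$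
   Context: A numerical semigroup is a submonoid $S\subseteq\mathbb{N}$ with finite complement. The minimal generating set has cardinality $\nu$ (embedding dimension); its smallest element $\mu$ is the multiplicity. The conductor $c$ is the least integer with $c+\mathbb{N}\subseteq S$. *)

(* Defs.v *)
From mathcomp Require Import all_boot all_order all_algebra.
Set Implicit Arguments. Unset Strict Implicit. Unset Printing Implicit Defensive.

Definition numerical_semigroup (S : pred nat) : Prop :=
  [/\ S 0, (forall x y, S x -> S y -> S (x + y))
    & exists N, forall n, N <= n -> S n].

Definition is_conductor (S : pred nat) (c : nat) : Prop :=
  (forall n, c <= n -> S n) /\
  (forall c', (forall n, c' <= n -> S n) -> c <= c').

Definition is_multiplicity (S : pred nat) (m : nat) : Prop :=
  [/\ S m, 0 < m & forall x, S x -> 0 < x -> m <= x].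

Definition min_gen (S : pred nat) (a : nat) : bool :=
  [&& S a, 0 < a & ~~ has (fun x => S x && S (a - x)) (iota 1 a.-1)].

(* Main.v *)
Require Import Defs.
From mathcomp Require Import all_boot all_order all_algebra.
From mathcomp Require Import lra zify.
Import Order.TTheory GRing.Theory Num.Theory.

Definition chain (mu a x : nat) : bool := (a <= x) && (mu %| x - a).

Lemma chain_count mu a n c : 0 < mu -> a + n * mu < c + mu ->
  n <= count (chain mu a) (iota 0 c).
Proof.
move=> mu0; elim: n c => [//|n IH] c h.
set x0 := a + n * mu.
have lt : x0 < c by move: h; rewrite /x0 mulSn; lia.
rewrite -(subnKC (ltnW lt)) iotaD count_cat add0n.
have -> : c - x0 = (c - x0 - 1).+1 by lia.
rewrite /= {2}/chain /x0 leq_addr addKn dvdn_mull //=.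
have := IH x0; rewrite /x0; lia.
Qed.

Lemma sum_disj (P : nat -> pred nat) (s : seq nat) (T : pred nat) t :
  uniq s -> (forall i j x, i \in s -> j \in s -> i != j -> P i x -> P j x -> False) ->
  (forall i x, i \in s -> P i x -> T x) ->
  \sum_(i <- s) count (P i) t <= count T t.
Proof.
elim: s T => [|i s IH] T; first by rewrite big_nil.
move=> /= /andP [nis us] hd hT; rewrite big_cons.
have split : count (P i) t + count (fun x => T x && ~~ P i x) t <= count T t.
  have e : count (P i) t = count (fun x => T x && P i x) t.
    apply: eq_count => x; case E: (P i x); last by rewrite andbF.
    by rewrite (hT i x _ E) // inE eqxx.
  rewrite e; clear; elim: t => //= x t IHt.
  by case: (T x); case: (P i x) => /=; lia.
apply: leq_trans split; rewrite leq_add2l; apply: IH => //.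
  by move=> i0 j x hi hj; apply: hd; rewrite inE ?hi ?hj orbT.
move=> j x hj hP; apply/andP; split; first by apply: (hT j x); rewrite // inE hj orbT.
apply/negP => hPi; apply: (hd j i x) => //; rewrite ?inE ?hj ?eqxx ?orbT //.
by apply/negP => /eqP ej; move: nis; rewrite -ej hj.
Qed.

Lemma Smul (S : pred nat) mu k : numerical_semigroup S -> S mu -> S (k * mu).
Proof.
case=> S0 Sadd _ Smu; elim: k => [|k IH]; first by rewrite mul0n.
by rewrite mulSn; apply: Sadd.
Qed.

Lemma not_min_gen (S : pred nat) j w : (0 < w) -> (w < j) -> S w -> S (j - w) -> ~~ min_gen S j.
Proof.
move=> w0 wj Sw Sjw; apply/negP => /and3P [_ _ /hasPn H].
have : w \in iota 1 j.-1 by rewrite mem_iota; lia.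
by move/H; rewrite Sw Sjw.
Qed.

Lemma chain_disj (S : pred nat) mu i j x : numerical_semigroup S -> is_multiplicity S mu ->
  i < j -> (i = 0 \/ (min_gen S i && (i != mu))) -> min_gen S j -> j != mu ->
  chain mu i x -> chain mu j x -> False.
Proof.
move=> ns [Smu mu0 _] ij hi gj jmu /andP [ix dix] /andP [jx djx].
have d : mu %| j - i.
  have -> : j - i = (x - i) - (x - j) by lia.
  exact: dvdn_sub.
case/dvdnP: d => k ek.
have Sk : forall k, S (k * mu) by move=> k'; apply: Smul.
case: hi => [i0|/andP [gi _]].
- subst i; rewrite subn0 in ek; subst j.
  have k2 : 1 < k.
    case: (ltnP 1 k) => // hk; exfalso.
    have : k = 0 \/ k = 1 by lia.
    by case=> ek; move: jmu ij; rewrite ek ?mul1n ?eqxx ?mul0n.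
  move: gj; apply/negP; apply: (@not_min_gen S _ mu) => //.
    by rewrite -[X in X < _]mul1n ltn_mul2r mu0.
  have -> : k * mu - mu = k.-1 * mu by rewrite -[X in _ - X]mul1n -mulnBl subn1.
  exact: Sk.
- case/and3P: (gi) => Si i0 _.
  move: gj; apply/negP; apply: (@not_min_gen S _ i) => //.
  by rewrite ek.
Qed.

Lemma sum_lb n (G : seq nat) (F : nat -> nat) :
  (forall a, a \in G -> n <= F a) -> n * size G <= \sum_(a <- G) F a.
Proof.
elim: G => [|a G IH] h; first by rewrite big_nil muln0.
rewrite big_cons /= mulnS leq_add //; first by apply: h; rewrite inE eqxx.
by apply: IH => b hb; apply: h; rewrite inE hb orbT.
Qed.

Lemma key (S : pred nat) c mu n0 n1 n2 (G1 G2 : seq nat) :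
  numerical_semigroup S -> is_multiplicity S mu -> uniq (G1 ++ G2) ->
  (forall a, a \in G1 ++ G2 -> min_gen S a && (a != mu)) -> n0 * mu <= c ->
  (forall a, a \in G1 -> a + n1 * mu < c + mu) ->
  (forall a, a \in G2 -> a + n2 * mu < c + mu) ->
  n0 + n1 * size G1 + n2 * size G2 <= count S (iota 0 c).
Proof.
move=> ns mult uG hG h0 h1 h2.
have [Smu mu0 _] := mult.
have ns' := ns; case: ns' => S0 Sadd _.
have hS : forall i, i \in 0 :: G1 ++ G2 -> i = 0 \/ (min_gen S i && (i != mu)).
  by move=> i; rewrite inE => /orP [/eqP ->|/hG ->]; [left|right].
have := @sum_disj (chain mu) (0 :: G1 ++ G2) S (iota 0 c).
rewrite big_cons big_cat /= => H; apply: leq_trans (H _ _ _); last first.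
- move=> i x /hS hi /andP [ix /dvdnP [k ek]].
  rewrite -(subnKC ix) ek; apply: Sadd; last exact: Smul.
  by case: hi => [->|/andP [/and3P [] //]].
- move=> i j x /hS hi /hS hj ij.
  case: (ltngtP i j) => [lt|lt|e]; last by rewrite e eqxx in ij.
  + move=> ci cj; apply: (@chain_disj S mu i j x ns mult lt hi _ _ ci cj).
    * case: hj => [j0|/andP [] //]; by move: lt; rewrite j0.
    * case: hj => [j0|/andP [] //]; by move: lt; rewrite j0.
  + move=> ci cj; apply: (@chain_disj S mu j i x ns mult lt hj _ _ cj ci).
    * case: hi => [i0|/andP [] //]; by move: lt; rewrite i0.
    * case: hi => [i0|/andP [] //]; by move: lt; rewrite i0.
- rewrite uG andbT; apply/negP => /hG /andP [/and3P [_ ] //].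
- rewrite -addnA leq_add //.
    apply: chain_count => //; lia.
  apply: leq_add; apply: sum_lb => a ha; apply: chain_count => //; [exact: h1|exact: h2].
Qed.

Local Open Scope ring_scope.
Lemma qn (n : nat) : n%:Q = n%:R. Proof. by []. Qed.
Lemma q2 : 2%:Q = 2. Proof. by []. Qed.
Lemma q3 : 3%:Q = 3. Proof. by []. Qed.

Lemma r1 (a c mu : nat) (k : int) (n : nat) : (0 < mu)%N -> k + 1 = n%:Z ->
  k%:~R <= 2%:Q^-1 * (c%:Q / mu%:Q) - 2%:Q^-1 -> a%:Q < (c + mu)%:Q / 2%:Q ->
  (a + n * mu < c + mu)%N.
Proof.
move=> mu0 hn hk ha.
rewrite -(ltr_nat rat) natrD natrM -(qn n) -hn (natrD _ c mu) rmorphD /=.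
rewrite !q2 !qn in hk ha. rewrite !(natrD _ c mu) in ha.
have m0 : (0 : rat) < mu%:R by rewrite ltr0n.
move: hk ha m0; set y := c%:R / mu%:R.
have hc : c%:R = y * mu%:R :> rat by rewrite /y divfK // gt_eqF // ltr0n.
rewrite hc; clearbody y. move: (k%:~R : rat) (mu%:R : rat) (a%:R : rat) => K M A hk ha m0.
have : (K+1) * M <= (y/2 + 1/2) * M by rewrite ler_pM2r //; lra.
nra.
Qed.

Lemma r2 (a c mu : nat) (k : int) (n : nat) : (0 < mu)%N -> k + 1 = n%:Z ->
  k%:~R <= 3%:Q^-1 * (c%:Q / mu%:Q) - 2%:Q / 3%:Q -> a%:Q < 2%:Q * (c + mu)%:Q / 3%:Q ->
  (a + n * mu < c + mu)%N.
Proof.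
move=> mu0 hn hk ha.
rewrite -(ltr_nat rat) natrD natrM -(qn n) -hn (natrD _ c mu) rmorphD /=.
rewrite !q2 !q3 !qn in hk ha. rewrite !(natrD _ c mu) in ha.
have m0 : (0 : rat) < mu%:R by rewrite ltr0n.
move: hk ha m0; set y := c%:R / mu%:R.
have hc : c%:R = y * mu%:R :> rat by rewrite /y divfK // gt_eqF // ltr0n.
rewrite hc; clearbody y. move: (k%:~R : rat) (mu%:R : rat) (a%:R : rat) => K M A hk ha m0.
have : (K+1) * M <= (y/3 + 1/3) * M by rewrite ler_pM2r //; lra.
nra.
Qed.

Lemma r0 (c mu n : nat) : (0 < mu)%N -> Num.floor (c%:Q / mu%:Q) = n%:Z -> (n * mu <= c)%N.
Proof.
move=> mu0 hn.
have := floor_le (c%:Q / mu%:Q); rewrite hn !qn.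
have m0 : (0 : rat) < mu%:R by rewrite ltr0n.
rewrite ler_pdivlMr // -natrM ler_nat //.
Qed.

Lemma icase (F : int) (P : nat -> Prop) : P 0%N -> (forall n, F = n%:Z -> P n) ->
  exists n, F <= n%:Z /\ P n.
Proof.
case: F => [n|n] h0 h; first by exists n; split => //; apply: h.
by exists 0%N.
Qed.

Theorem proposition3p2 (S : pred nat) (c mu : nat) :
  numerical_semigroup S ->
  is_conductor S c ->
  is_multiplicity S mu ->
  (* embedding dimension nu >= 2 *)
  (exists a, min_gen S a /\ a <> mu) ->
  (* a_2 > (c + mu)/3, i.e. every minimal generator other than mu exceeds (c+mu)/3 *)
  (forall a, min_gen S a -> a <> mu -> ((c + mu)%:Q / 3%:Q < a%:Q)%R) ->
  let q1 := count (fun a => [&& min_gen S a, a != mu,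
                   ((c + mu)%:Q / 3%:Q < a%:Q)%R & (a%:Q < (c + mu)%:Q / 2%:Q)%R])
                  (iota 0 (c + mu)) in
  let q2 := count (fun a => [&& min_gen S a, a != mu,
                   ((c + mu)%:Q / 2%:Q <= a%:Q)%R & (a%:Q < 2%:Q * (c + mu)%:Q / 3%:Q)%R])
                  (iota 0 (c + mu)) in
  let L := count (fun x => S x) (iota 0 c) in
  (Num.floor (c%:Q / mu%:Q)
   + (Num.floor (2%:Q^-1 * (c%:Q / mu%:Q) - 2%:Q^-1) + 1) * q1%:Z
   + (Num.floor (3%:Q^-1 * (c%:Q / mu%:Q) - 2%:Q / 3%:Q) + 1) * q2%:Z
   <= L%:Z)%R.
Proof.
move=> ns _ mult _ _.
set P1 := (fun a => _); set P2 := (fun a => _); cbv zeta.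
have [_ mu0 _] := mult.
set G1 := filter P1 (iota 0 (c + mu)); set G2 := filter P2 (iota 0 (c + mu)).
have hq1 : count P1 (iota 0 (c + mu)) = size G1 by rewrite size_filter.
have hq2 : count P2 (iota 0 (c + mu)) = size G2 by rewrite size_filter.
have [n0 [e0 h0]] : exists n0, Num.floor (c%:Q / mu%:Q) = n0%:Z /\ (n0 * mu <= c)%N.
  have : 0 <= Num.floor (c%:Q / mu%:Q) by rewrite floor_ge0 divr_ge0 // ler0z.
  case E: (Num.floor _) => [n|n] // _; exists n; split => //; exact: r0 E.
have [n1 [e1 h1]] : exists n, (Num.floor (2%:Q^-1 * (c%:Q / mu%:Q) - 2%:Q^-1) + 1 <= n%:Z)%R /\
   (forall a, a \in G1 -> (a + n * mu < c + mu)%N).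
{ apply: (@icase _ (fun n => forall a, a \in G1 -> (a + n * mu < c + mu)%N)).
  + by move=> a; rewrite mem_filter mem_iota => /andP [_ /andP [_]]; rewrite mul0n addn0.
  + move=> n hn a; rewrite mem_filter => /andP [/and4P [_ _ _ ha] _].
    exact: r1 mu0 hn (floor_le _) ha. }
have [n2 [e2 h2]] : exists n, (Num.floor (3%:Q^-1 * (c%:Q / mu%:Q) - 2%:Q / 3%:Q) + 1 <= n%:Z)%R /\
   (forall a, a \in G2 -> (a + n * mu < c + mu)%N).
{ apply: (@icase _ (fun n => forall a, a \in G2 -> (a + n * mu < c + mu)%N)).
  + by move=> a; rewrite mem_filter mem_iota => /andP [_ /andP [_]]; rewrite mul0n addn0.
  + move=> n hn a; rewrite mem_filter => /andP [/and4P [_ _ _ ha] _].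
    exact: r2 mu0 hn (floor_le _) ha. }
rewrite hq1 hq2.
apply: (@le_trans _ _ (n0 + n1 * size G1 + n2 * size G2)%N%:Z).
  rewrite e0 !PoszD !PoszM -!addrA lerD2l lerD // ler_wpM2r //.
rewrite lez_nat; apply: (@key S c mu) => //.
- rewrite cat_uniq !filter_uniq ?iota_uniq //= andbT.
  apply/hasPn => a; rewrite !mem_filter => /andP [/and4P [_ _ ha _] _].
  apply/negP => /andP [/and4P [_ _ _ hb] _].
  by move: (lt_le_trans hb ha); rewrite ltxx.
- move=> a; rewrite mem_cat !mem_filter => /orP [] /andP [/and4P [-> -> _ _] _] //.
Qed.
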